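(* Let $U$ be a $\kappa$-cut that is not $(\mathrm{I},\kappa-1)$-small and has at least three sides. Then every other $\kappa$-cut $W$ either is a laminar cut of $U$ (i.e. $W\subseteq U\cup A$ for some side $A$ of $U$) or is itself $(\mathrm{I},\kappa-1)$-small.
   Context: $G=(V,E)$ is a finite, simple, connected, undirected, non-complete graph with $n=|V|$; $\kappa$ is its vertex connectivity, assumed to satisfy $\kappa<n/4$. A cut is a set $U\subset V$ whose removal disconnects $G$; a $\kappa$-cut is a cut of size $\kappa$. A side of a cut $U$ is a connected component of the subgraph induced on $V\setminus U$. A cut $U$ with sides $A_1,\dots,A_a$ is $(\mathrm{I},t)$-small if there is an index $i^\sharp$ with $\sum_{i\neq i^\sharp}|A_i|\le t$. A cut $W$ is a laminar cut of $U$ if $W\subseteq U\cup A$ for some side $A$ of $U$. *)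

(* Defs.v *)
From mathcomp Require Import all_boot.
Set Implicit Arguments. Unset Strict Implicit. Unset Printing Implicit Defensive.

Section Graph.
Variables (T : finType) (e : rel T).

Definition simple_graph := symmetric e /\ irreflexive e.
Definition graph_connected := forall x y : T, connect e x y.
Definition non_complete := exists x y : T, (x != y) && ~~ e x y.

Definition rem_rel (U : {set T}) : rel T :=
  fun x y => [&& e x y, x \notin U & y \notin U].

Definition is_cut (U : {set T}) : bool :=
  [exists x, exists y, [&& x \notin U, y \notin U & ~~ connect (rem_rel U) x y]].

(* the side (component of G[V\U]) containing x, for x \notin U *)
Definition side_of (U : {set T}) (x : T) : {set T} :=
  [set y | (y \notin U) && connect (rem_rel U) x y].

Definition sides (U : {set T}) : {set {set T}} :=
  [set side_of U x | x in ~: U].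

(* vertex connectivity kappa: minimum size of a cut (G non-complete) *)
Definition kappa : nat :=
  \big[minn/#|T|]_(U : {set T} | is_cut U) #|U|.

Definition small_I (U : {set T}) (t : nat) : Prop :=
  is_cut U /\
  exists2 A0, A0 \in sides U & \sum_(A in sides U | A != A0) #|A| <= t.

Definition laminar_cut (U W : {set T}) : Prop :=
  is_cut W /\ exists2 A, A \in sides U & W \subset U :|: A.

End Graph.

(* Main.v *)
Require Import Defs.
From mathcomp Require Import all_boot.
From mathcomp Require Import zify.
Set Implicit Arguments. Unset Strict Implicit.

Lemma side_ofE (T : finType) (e : rel T) (U : {set T}) x y :
  (y \in side_of e U x) = (y \notin U) && connect (rem_rel e U) x y.
Proof. by rewrite /side_of inE. Qed.

Lemma rem_connect_sym (T : finType) (e : rel T) (U : {set T}) :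
  symmetric e -> connect_sym (rem_rel e U).
Proof.
move=> Hs; apply: sym_connect_sym => x y; rewrite /rem_rel /= Hs.
by case: (x \in U); case: (y \in U); rewrite ?andbF.
Qed.

Lemma side_self (T : finType) (e : rel T) (U : {set T}) x :
  x \notin U -> x \in side_of e U x.
Proof. by move=> Hx; rewrite side_ofE Hx connect0. Qed.

Lemma side_eq (T : finType) (e : rel T) (U : {set T}) x y :
  symmetric e -> y \in side_of e U x -> side_of e U y = side_of e U x.
Proof.
move=> Hs; rewrite side_ofE => /andP [Hy Hxy]; apply/setP => z.
rewrite !side_ofE; case: (z \in U) => //=.
apply/idP/idP => H; first exact: connect_trans Hxy H.
by apply: connect_trans H; rewrite rem_connect_sym.
Qed.

Lemma side_step (T : finType) (e : rel T) (U : {set T}) x y z :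
  y \in side_of e U x -> e y z -> z \notin U -> z \in side_of e U x.
Proof.
rewrite !side_ofE => /andP [Hy Hxy] Hyz Hz; rewrite Hz /=.
apply: connect_trans Hxy (connect1 _); by rewrite /rem_rel Hyz Hy Hz.
Qed.

Lemma side_notin (T : finType) (e : rel T) (U : {set T}) x y :
  y \in side_of e U x -> y \notin U.
Proof. by rewrite side_ofE => /andP []. Qed.

Lemma sides_triv (T : finType) (e : rel T) (U : {set T}) :
  symmetric e -> trivIset (sides e U).
Proof.
move=> Hs; apply/trivIsetP => A B /imsetP [x _ ->] /imsetP [y _ ->] Hne.
rewrite -setI_eq0; apply/eqP/setP => z; rewrite in_setI in_set0.
apply/negP => /andP [Hz1 Hz2]; move/negP: Hne; apply; apply/eqP.
by rewrite -(side_eq Hs Hz1) -(side_eq Hs Hz2).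
Qed.

Lemma sep_cut (T : finType) (e : rel T) (S B : {set T}) x z0 :
  x \in B -> (forall y, y \in B -> y \notin S) ->
  (forall y z, y \in B -> e y z -> (z \in B) || (z \in S)) ->
  z0 \notin B -> z0 \notin S -> is_cut e S.
Proof.
move=> Hx Hdis Hcl Hz0B Hz0S.
apply/existsP; exists x; apply/existsP; exists z0.
rewrite (Hdis x Hx) Hz0S /=.
apply/negP => /connectP [p Hp Hlast].
have key : forall q y, y \in B -> path (rem_rel e S) y q -> last y q \in B.
  elim=> [|z q IH] y Hy //= /andP [Hyz Hq]; apply: IH Hq.
  move: Hyz; rewrite /rem_rel => /and3P [Heyz _ HzS].
  by have := Hcl y z Hy Heyz; rewrite (negbTE HzS) orbF.
by move: (key p x Hx Hp); rewrite -Hlast (negbTE Hz0B).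
Qed.

Lemma kappa_le (T : finType) (e : rel T) (S : {set T}) :
  is_cut e S -> kappa e <= #|S|.
Proof.
move=> HS; rewrite /kappa; have := mem_index_enum S.
elim: (index_enum _) => [//|A r IH]; rewrite inE big_cons.
case/orP => [/eqP <-|H]; first by rewrite HS geq_minl.
case: ifP => _; last exact: IH.
by rewrite geq_min IH ?orbT.
Qed.

Lemma card_disjU (T : finType) (X Y : {set T}) :
  (forall z, z \in X -> z \in Y -> False) -> #|X :|: Y| = #|X| + #|Y|.
Proof.
move=> H; have E : X :&: Y = set0.
  apply/setP => z; rewrite !inE; apply/negP => /andP [H1 H2]; exact: H z H1 H2.
by have := cardsUI X Y; rewrite E cards0 addn0.
Qed.

Lemma card_dec3 (T : finType) (X Y Z : {set T}) :
  (forall z, z \in Y -> z \in Z -> False) ->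
  #|X :&: Y| + #|X :&: Z| + #|X :\: (Y :|: Z)| = #|X|.
Proof.
move=> H; rewrite -(cardsID (Y :|: Z) X) setIUr card_disjU //.
move=> z; rewrite !inE => /andP [_ H1] /andP [_ H2]; exact: H z H1 H2.
Qed.

Lemma ar1 a b c x y i j : a + i = b + c -> b + j = x + y -> a <= x + y + c.
Proof. lia. Qed.
Lemma ar2 p q r w k b : p + q + r = w -> w = k -> k <= q + p + b -> 0 < r -> 0 < b.
Proof. lia. Qed.
Lemma ar3 p q r u k : p + q + r = u -> u = k -> k <= 0 + p + q -> r == 0.
Proof. lia. Qed.
Lemma ar4 k a p b a' b' d f w u : k <= a + p + b -> k <= a' + p + b' ->
  p + a + d = w -> p + b + f = u -> a' < d -> b' <= f -> w = k -> u = k -> False.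
Proof. lia. Qed.
Lemma ar5 c b1 c1 b2 c2 : 3 <= c -> c = b1 + c1 -> c1 = b2 + c2 -> b1 <= 1 -> b2 <= 1 -> 0 < c2.
Proof. lia. Qed.
Lemma ar6 k s c d a p b f w u : k <= s -> s = c -> c <= d -> k <= a + p + b ->
  p + a + d = w -> p + b + f = u -> 0 < f -> w = k -> u = k -> False.
Proof. lia. Qed.
Lemma ar7 p b f u k c : p + b + f = u -> u = k -> c <= f -> 0 < b -> c <= k - 1.
Proof. lia. Qed.
Lemma ar8 nU nC n k c : nU + nC = n -> nU = k -> nC <= c -> c = k -> 4 * k < n -> False.
Proof. lia. Qed.
Theorem corollary1 (T : finType) (e : rel T)
  (Hsimple : simple_graph e) (Hconn : graph_connected e)
  (Hnc : non_complete e) (Hkappa : 4 * kappa e < #|T|)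
  (U : {set T}) (HU : is_cut e U) (HUk : #|U| = kappa e)
  (HUns : ~ small_I e U (kappa e - 1)) (HU3 : 3 <= #|sides e U|)
  (W : {set T}) (HW : is_cut e W) (HWk : #|W| = kappa e) (HWU : W != U) :
  laminar_cut e U W \/ small_I e W (kappa e - 1).
Proof.
have [Hs _] := Hsimple.
have Hsep := @sep_cut T e.
have Hcut := @kappa_le T e.
have sidesP : forall (X : {set T}) x, x \notin X -> side_of e X x \in sides e X.
  by move=> X x Hx; apply: imset_f; rewrite inE.
case: (boolP [exists A in sides e U, W \subset U :|: A]) => [Hl|Hnl].
  left; split => //; case/existsP: Hl => A /andP [HA HWA]; by exists A.
have Hnl' : forall x, x \notin U ->
    exists w, [/\ w \in W, w \notin U & w \notin side_of e U x].
  move=> x Hx; move/existsP: Hnl => Hnl.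
  have : ~~ (W \subset U :|: side_of e U x).
    apply/negP => H; apply: Hnl; exists (side_of e U x); by rewrite sidesP.
  case/subsetPn => w Hw; rewrite in_setU negb_or => /andP [H1 H2].
  by exists w.
have CI : forall x, x \notin U -> x \notin W ->
   kappa e <= #|W :&: side_of e U x| + #|U :&: W| + #|U :&: side_of e W x|.
  move=> x HxU HxW; have [w [HwW HwU HwA]] := Hnl' x HxU.
  set A := side_of e U x; set B := side_of e W x.
  set S := (W :&: A) :|: (U :&: W) :|: (U :&: B).
  apply: (@leq_trans #|S|).
    apply: Hcut; apply: (Hsep S (A :&: B) x w).
    - by rewrite in_setI side_self // side_self.
    - move=> y; rewrite in_setI => /andP [HyA HyB].
      rewrite !in_setU !in_setI (negbTE (side_notin HyA)) (negbTE (side_notin HyB)).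
      by rewrite !andbF.
    - move=> y z; rewrite in_setI => /andP [HyA HyB] Hyz.
      rewrite !in_setU !in_setI.
      case HzU: (z \in U); case HzW: (z \in W) => /=.
      + by rewrite !orbT.
      + have HzB : z \in B by apply: (side_step HyB Hyz); rewrite HzW.
        by rewrite HzB orbT.
      + have HzA : z \in A by apply: (side_step HyA Hyz); rewrite HzU.
        by rewrite HzA orbT.
      + have HzB : z \in B by apply: (side_step HyB Hyz); rewrite HzW.
        have HzA : z \in A by apply: (side_step HyA Hyz); rewrite HzU.
        by rewrite HzA HzB.
    - by rewrite in_setI (negbTE HwA).
    - by rewrite !in_setU !in_setI HwW (negbTE HwA) (negbTE HwU).
  exact: (ar1 (cardsUI (W :&: A :|: U :&: W) (U :&: B)) (cardsUI (W :&: A) (U :&: W))).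
have disjU : forall (X : {set T}) x z, z \in X -> z \in side_of e X x -> False.
  by move=> X x z H1 /side_notin; rewrite H1.
have disjU' : forall (X : {set T}) x z, z \in side_of e X x -> z \in X -> False.
  by move=> X x z H1 H2; exact: disjU H2 H1.
have sideD : forall (X : {set T}) x y z, z \in side_of e X x -> z \in side_of e X y ->
    side_of e X x = side_of e X y.
  by move=> X x y z H1 H2; rewrite -(side_eq Hs H1) -(side_eq Hs H2).
have L0 : forall y, y \notin U -> y \notin W ->
    exists u, [/\ u \in U, u \notin W & u \in side_of e W y].
  move=> y HyU HyW; have [w [HwW HwU HwA]] := Hnl' y HyU.
  have C := CI y HyU HyW.
  have D := card_dec3 W (disjU U y).
  have P : 0 < #|W :\: (U :|: side_of e U y)|.
    apply/card_gt0P; exists w; by rewrite in_setD in_setU negb_or HwU HwA HwW.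
  have : 0 < #|U :&: side_of e W y| by rewrite setIC in D; exact: ar2 D HWk C P.
  case/card_gt0P => u; rewrite in_setI => /andP [HuU HuB].
  by exists u; split => //; apply: side_notin HuB.
have L1 : forall x, x \notin U -> exists w, w \in W :&: side_of e U x.
  move=> x HxU; case: (eqVneq (W :&: side_of e U x) set0) => [H0|]; last by move/set0Pn.
  exfalso.
  have HxW : x \notin W.
    apply/negP => HxW; have : x \in W :&: side_of e U x by rewrite in_setI HxW side_self.
    by rewrite H0 in_set0.
  have C := CI x HxU HxW; rewrite H0 cards0 in C.
  have D := card_dec3 U (disjU W x).
  have E : U :\: (W :|: side_of e W x) = set0 by apply/eqP; rewrite -cards_eq0; exact: ar3 D HUk C.
  have Hall : forall y, y \notin W -> connect (rem_rel e W) x y.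
    move=> y HyW; case HyU: (y \in U).
      have : y \notin U :\: (W :|: side_of e W x) by rewrite E in_set0.
      by rewrite in_setD in_setU HyU (negbTE HyW) /= andbT negbK side_ofE => /andP [].
    have [u [HuU HuW HuB]] := L0 y (negbT HyU) HyW.
    have : u \notin U :\: (W :|: side_of e W x) by rewrite E in_set0.
    rewrite in_setD in_setU HuU (negbTE HuW) /= andbT negbK side_ofE => /andP [_ Hxu].
    apply: connect_trans Hxu _; rewrite rem_connect_sym //.
    by move: HuB; rewrite side_ofE => /andP [].
  case/existsP: HW => y1 /existsP [y2 /and3P [H1 H2 Hn]].
  move/negP: Hn; apply; apply: connect_trans (Hall y2 H2).
  by rewrite rem_connect_sym // Hall.
have L2 : forall x x', x \notin U -> x \notin W -> x' \notin U -> x' \notin W ->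
   side_of e U x != side_of e U x' -> side_of e W x != side_of e W x' -> False.
  move=> x x' HxU HxW Hx'U Hx'W HA HB.
  have [A'' HA''] : exists A'', A'' \in sides e U :\ side_of e U x :\ side_of e U x'.
    apply/card_gt0P; have := cardsD1 (side_of e U x) (sides e U).
    have := cardsD1 (side_of e U x') (sides e U :\ side_of e U x).
    have := leq_b1 (side_of e U x \in sides e U).
    have := leq_b1 (side_of e U x' \in sides e U :\ side_of e U x).
    move=> h1 h2 h3 h4; exact: ar5 HU3 h4 h3 h2 h1.
  move: HA''; rewrite !in_setD1 => /and3P [HA''A' HA''A /imsetP [x'' Hx'' E'']].
  rewrite inE in Hx''; subst A''.
  have [w'' Hw''] := L1 x'' Hx''; move: Hw''; rewrite in_setI => /andP [Hw''W Hw''A].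
  have C1 := CI x HxU HxW; have C2 := CI x' Hx'U Hx'W.
  have D1 := card_dec3 W (disjU U x).
  have D2 := card_dec3 U (disjU W x).
  have P1 : #|W :&: side_of e U x'| < #|W :\: (U :|: side_of e U x)|.
    apply: proper_card; apply/properP; split.
      apply/subsetP => z; rewrite in_setI in_setD in_setU => /andP [HzW HzA'].
      rewrite HzW (negbTE (side_notin HzA')) /= andbT.
      apply/negP => HzA; move/negP: HA; apply; apply/eqP; exact: sideD HzA HzA'.
    exists w''.
      rewrite in_setD in_setU Hw''W (negbTE (side_notin Hw''A)) /= andbT.
      apply/negP => H; move/negP: HA''A; apply; apply/eqP; exact: sideD Hw''A H.
    rewrite in_setI negb_and; apply/orP; right.
    apply/negP => H; move/negP: HA''A'; apply; apply/eqP; exact: sideD Hw''A H.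
  have P2 : #|U :&: side_of e W x'| <= #|U :\: (W :|: side_of e W x)|.
    apply: subset_leq_card; apply/subsetP => z; rewrite in_setI in_setD in_setU.
    move=> /andP [HzU HzB']; rewrite HzU (negbTE (side_notin HzB')) /= andbT.
    apply/negP => HzB; move/negP: HB; apply; apply/eqP; exact: sideD HzB HzB'.
  rewrite setIC in D1; exact: ar4 C1 C2 D1 D2 P1 P2 HWk HUk.
have L3 : forall x x', x \notin U -> x \notin W -> x' \notin U -> x' \notin W ->
   side_of e W x != side_of e W x' -> False.
  move=> x x' HxU HxW Hx'U Hx'W HBB.
  case: (eqVneq (side_of e U x) (side_of e U x')) => [EA|NA]; last exact: L2 HxU HxW Hx'U Hx'W NA HBB.
  have Hout : forall y, y \notin U -> y \notin side_of e U x -> y \in W.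
    move=> y HyU HyA; case HyW: (y \in W) => //; exfalso.
    have NAy : side_of e U y != side_of e U x.
      by apply/eqP => E; move/negP: HyA; apply; rewrite -E side_self.
    case: (eqVneq (side_of e W y) (side_of e W x)) => [EB|NB].
      by apply: (L2 y x' HyU (negbT HyW) Hx'U Hx'W); rewrite -?EA ?EB.
    exact: (L2 y x HyU (negbT HyW) HxU HxW).
  have Hsum : kappa e <= \sum_(B in sides e U | B != side_of e U x) #|B|.
    case: (leqP (kappa e) (\sum_(B in sides e U | B != side_of e U x) #|B|)) => // H.
    exfalso; apply: HUns; split => //; exists (side_of e U x); first exact: sidesP.
    by rewrite leq_subRL ?addn1 //; apply: leq_ltn_trans H.
  rewrite (eq_bigl (fun B => B \in sides e U :\ side_of e U x)) in Hsum; last first.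
    by move=> B; rewrite in_setD1 andbC.
  have := trivIsetS (subD1set (sides e U) (side_of e U x)) (sides_triv U Hs).
  move/eqP => Ecov; rewrite Ecov in Hsum.
  have Hsub : cover (sides e U :\ side_of e U x) \subset W :\: (U :|: side_of e U x).
    apply/subsetP => z /bigcupP [B HB1 HzB].
    move: HB1; rewrite in_setD1 => /andP [HBA /imsetP [y _ EB]]; subst B.
    have HzU := side_notin HzB.
    have HzA : z \notin side_of e U x.
      apply/negP => HzA; move/negP: HBA; apply; apply/eqP; exact: sideD HzB HzA.
    by rewrite in_setD in_setU negb_or HzU HzA Hout.
  have C := CI x HxU HxW.
  have D1 := card_dec3 W (disjU U x).
  have [u [HuU HuW HuB]] := L0 x' Hx'U Hx'W.
  have D2 := card_dec3 U (disjU W x).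
  have P : 0 < #|U :\: (W :|: side_of e W x)|.
    apply/card_gt0P; exists u; rewrite in_setD in_setU HuU negb_or HuW /= andbT.
    apply/negP => H; move/negP: HBB; apply; apply/eqP; exact: sideD H HuB.
  rewrite setIC in D1.
  exact: ar6 Hsum (erefl _) (subset_leq_card Hsub) C D1 D2 P HWk HUk.
have [x0 [Hx0U Hx0W]] : exists x0, x0 \notin U /\ x0 \notin W.
  case: (boolP (~: U \subset W)) => [Hsub|/subsetPn [x0]]; last first.
    by rewrite inE => H1 H2; exists x0.
  exfalso; exact: ar8 (cardsC U) HUk (subset_leq_card Hsub) HWk Hkappa.
right; split => //; exists (side_of e W x0); first exact: sidesP.
rewrite (eq_bigl (fun B => B \in sides e W :\ side_of e W x0)); last first.
  by move=> B; rewrite in_setD1 andbC.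
have := trivIsetS (subD1set (sides e W) (side_of e W x0)) (sides_triv W Hs).
move/eqP => ->.
have Hsub : cover (sides e W :\ side_of e W x0) \subset U :\: (W :|: side_of e W x0).
  apply/subsetP => z /bigcupP [B HB HzB].
  move: HB; rewrite in_setD1 => /andP [HB0 /imsetP [y _ EB]]; subst B.
  have HzW := side_notin HzB.
  have HzB0 : z \notin side_of e W x0.
    apply/negP => H; move/negP: HB0; apply; apply/eqP; exact: sideD HzB H.
  rewrite in_setD in_setU negb_or HzW HzB0 /=.
  case HzU: (z \in U) => //; exfalso.
  apply: (L3 z x0 (negbT HzU) HzW Hx0U Hx0W); apply/eqP => E.
  move/negP: HB0; apply; apply/eqP; rewrite -E; symmetry; exact: side_eq Hs HzB.
have [u [HuU HuW HuB]] := L0 x0 Hx0U Hx0W.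
have D2 := card_dec3 U (disjU W x0).
have P : 0 < #|U :&: side_of e W x0| by apply/card_gt0P; exists u; rewrite in_setI HuU.
exact: ar7 D2 HUk (subset_leq_card Hsub) P.
Qed.
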